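(* Let $m\geq 2$ and $n\geq 2$ be integers, let $G_m$ be a graph of order $m$ and $K_n$ the complete graph of order $n$. Then $$\max\{rvc(G_m),\,n+1\}\leq rvcl(G_m\diamond K_n)\leq m+n+|E(G_m)|-1.$$
   Context: All graphs are finite, simple, connected and undirected; $d$ denotes graph distance. A rainbow vertex $k$-coloring of $G$ is a map $c:V(G)\to\{1,\dots,k\}$ such that every two vertices are joined by a path whose internal vertices all receive distinct colors; $rvc(G)$ is the least $k$ for which $G$ has one. For such $c$ let $R_i=c^{-1}(i)$; the rainbow code of $v$ is $(d(v,R_1),\dots,d(v,R_k))$ with $d(v,R_i)=\min_{x\in R_i}d(v,x)$. A locating rainbow $k$-coloring is a rainbow vertex $k$-coloring in which distinct vertices have distinct rainbow codes; $rvcl(G)$ is the least $k$ for which one exists. For graphs $G_m$ (order $m$) and $H_n$ (order $n$) on disjoint vertex sets, the edge corona $G_m\diamond H_n$ is obtained from one copy of $G_m$ and $|E(G_m)|$ vertex-disjoint copies of $H_n$, one per edge of $G_m$, by joining both end vertices of the $j$-th edge of $G_m$ to every vertex of the $j$-th copy of $H_n$. *)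

(* Defs.v *)
From mathcomp Require Import all_boot.
Set Implicit Arguments. Unset Strict Implicit. Unset Printing Implicit Defensive.

Definition simple_graph (T : finType) (e : rel T) := symmetric e /\ irreflexive e.
Definition connected_graph (T : finType) (e : rel T) := forall x y : T, connect e x y.

Fixpoint ball (T : finType) (e : rel T) (x : T) (k : nat) : {set T} :=
  match k with
  | 0 => [set x]
  | k'.+1 => ball e x k' :|: [set y | [exists z in ball e x k', e z y]]
  end.

(* graph distance d(x,y): least k with y in ball e x k (meaningful for connected graphs) *)
Definition gdist (T : finType) (e : rel T) (x y : T) : nat :=
  find (fun k => y \in ball e x k) (iota 0 #|T|).

Definition rainbow_connected (T : finType) (e : rel T) (k : nat) (c : T -> 'I_k)
  (u v : T) : Prop :=
  exists p : seq T, path e u (rcons p v) && uniq (map c p).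

Definition rainbow_vertex_coloring (T : finType) (e : rel T) (k : nat) (c : T -> 'I_k) :=
  forall u v : T, u != v -> rainbow_connected e c u v.

Definition dist_class (T : finType) (e : rel T) (k : nat) (c : T -> 'I_k) (v : T) (i : 'I_k) : nat :=
  \big[minn/#|T|]_(x | c x == i) gdist e v x.

Definition locating_rainbow_coloring (T : finType) (e : rel T) (k : nat) (c : T -> 'I_k) :=
  [/\ rainbow_vertex_coloring e c,
      (forall i : 'I_k, exists x, c x = i) &
      (forall u v : T, (forall i, dist_class e c u i = dist_class e c v i) -> u = v)].

Definition is_rvc (T : finType) (e : rel T) (r : nat) :=
  (exists c : T -> 'I_r, rainbow_vertex_coloring e c) /\
  (forall k (c : T -> 'I_k), rainbow_vertex_coloring e c -> r <= k).

Definition is_rvcl (T : finType) (e : rel T) (l : nat) :=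
  (exists c : T -> 'I_l, locating_rainbow_coloring e c) /\
  (forall k (c : T -> 'I_k), locating_rainbow_coloring e c -> l <= k).

Definition is_edge (T : finType) (e : rel T) (A : {set T}) : bool :=
  [exists x, exists y, e x y && (A == [set x; y])].
Definition gedge (T : finType) (e : rel T) := {A : {set T} | is_edge e A}.

Definition complete_rel (n : nat) : rel 'I_n := fun u v => u != v.

(* edge corona G <> H: vertices of G plus one copy of H per edge of G *)
Definition corona_vertex (T : finType) (e : rel T) (U : finType) : finType :=
  (T + (gedge e * U))%type.

Definition edge_corona (T : finType) (e : rel T) (U : finType) (h : rel U)
  : rel (corona_vertex e U) :=
  fun a b =>
    match a, b with
    | inl x, inl y => e x y
    | inl x, inr (A, _) => x \in val A
    | inr (A, _), inl x => x \in val A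
    | inr (A, u), inr (B, v) => (A == B) && h u v
    end.

(* Main.v *)
Require Import Defs.
From mathcomp Require Import all_boot zify.
From Stdlib Require Import Classical.
Set Implicit Arguments. Unset Strict Implicit. Unset Printing Implicit Defensive.

Lemma card_ge2 (T : finType) (x y : T) : x != y -> 1 < #|T|.
Proof. move=> nxy; have := max_card (mem [set x; y]); by rewrite cards2 nxy. Qed.

Lemma ex_min (P : nat -> Prop) k : P k -> exists l, P l /\ forall j, P j -> l <= j.
Proof.
elim/ltn_ind: k => k IH Pk.
case: (classic (exists j, j < k /\ P j)) => [[j [hj Pj]]|hn]; first exact: IH Pj.
exists k; split => // j Pj; rewrite leqNgt; apply/negP => hj; apply: hn; by exists j.
Qed.

Section Dist.
Variables (T : finType) (e : rel T).

Lemma ballS x j : ball e x j.+1 = ball e x j :|: [set y | [exists z in ball e x j, e z y]].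
Proof. by []. Qed.

Lemma ball1 x y : (y \in ball e x 1) = (y == x) || e x y.
Proof.
rewrite /= !inE; congr orb; apply/existsP/idP => [[z /andP [/set1P -> //]]|h].
by exists x; rewrite inE eqxx.
Qed.

Lemma gdist_refl x : gdist e x x = 0.
Proof.
rewrite /gdist.
have : 0 < #|T| by apply/card_gt0P; exists x.
case: #|T| => // N _ /=. by rewrite inE eqxx.
Qed.

Lemma gdist_le1 x y : gdist e x y <= 1 -> y = x \/ e x y.
Proof.
rewrite /gdist => H.
case: (boolP (has (fun k => y \in ball e x k) (iota 0 #|T|))) => [hs|hn].
- have hlt : find (fun k => y \in ball e x k) (iota 0 #|T|) < #|T|.
    by rewrite -{2}(size_iota 0 #|T|) -has_find.
  have := nth_find 0 hs. rewrite nth_iota // add0n.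
  move: H; case: (find _ _) => [|[|k]] //= _.
  + by rewrite inE => /eqP ->; left.
  + rewrite -/(ball e x 1) ball1 => /orP [/eqP ->|]; [by left|by right].
- rewrite (hasNfind hn) size_iota in H.
  left; apply/eqP; apply: contraTT H => nxy; rewrite -ltnNge; exact: card_ge2 nxy.
Qed.

Lemma gdist0 x y : gdist e x y = 0 -> y = x.
Proof.
rewrite /gdist => H.
case: (boolP (has (fun k => y \in ball e x k) (iota 0 #|T|))) => [hs|hn].
- have := nth_find 0 hs. rewrite H.
  have : 0 < #|T| by apply/card_gt0P; exists x.
  case: #|T| => // N _ /=. by rewrite inE => /eqP.
- rewrite (hasNfind hn) size_iota in H.
  have : 0 < #|T| by apply/card_gt0P; exists x.
  by rewrite H.
Qed.

Lemma gdist_adj x y : e x y -> gdist e x y <= 1.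
Proof.
move=> exy.
case: (leqP #|T| 1) => hT.
- have -> : y = x by apply/eqP; apply: contraTT hT => nxy; rewrite -ltnNge; exact: card_ge2 nxy.
  by rewrite gdist_refl.
- rewrite /gdist leqNgt; apply/negP => h.
  have := before_find 0 h. rewrite nth_iota // add0n -/(ball e x 1) ball1 exy orbT //.
Qed.

Variables (k : nat) (c : T -> 'I_k).

Lemma dist_class_le v i x : c x = i -> dist_class e c v i <= gdist e v x.
Proof.
move=> cx; rewrite /dist_class unlock.
have : x \in index_enum T by rewrite mem_index_enum.
elim: (index_enum T) => //= a s IH; rewrite inE => /orP [/eqP <-|xs].
  by rewrite cx eqxx geq_minl.
by case: (c a == i); [rewrite geq_min (IH xs) orbT | exact: IH].
Qed.

Lemma dist_class_self v : dist_class e c v (c v) = 0.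
Proof. by apply/eqP; rewrite -leqn0 -(gdist_refl v); exact: dist_class_le. Qed.

Lemma dist_class_ge v i j : (forall x, c x = i -> j <= gdist e v x) -> j <= #|T| ->
  j <= dist_class e c v i.
Proof.
move=> H hj; rewrite /dist_class; elim/big_ind: _ => //.
- by move=> a b ha hb; rewrite leq_min ha hb.
- by move=> x /eqP; exact: H.
Qed.

Lemma dist_ge1 v i : c v != i -> 0 < dist_class e c v i.
Proof.
move=> ne; apply: dist_class_ge.
- move=> x cx; rewrite lt0n; apply/eqP => /gdist0 xv; subst x; by rewrite cx eqxx in ne.
- by apply/card_gt0P; exists v.
Qed.

Lemma twin_ball a b : (forall y, ((y == a) || e a y) = ((y == b) || e b y)) ->
  forall j, 0 < j -> ball e a j = ball e b j.
Proof.
move=> H; elim => // j IH _.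
case: j IH => [|j] IH; first by apply/setP => y; rewrite !ball1 H.
by rewrite [ball e a _]ballS [ball e b _]ballS IH.
Qed.

Lemma twin_code a b : (forall y, ((y == a) || e a y) = ((y == b) || e b y)) ->
  c a = c b -> forall i, dist_class e c a i = dist_class e c b i.
Proof.
move=> H cab i.
case: (eqVneq i (c a)) => [->|ne]; first by rewrite {2}cab !dist_class_self.
apply: eq_bigr => x /eqP cx; rewrite /gdist; apply: eq_find => [[|j]].
- rewrite /= !inE; case: eqP => [xa|]; first by subst; rewrite eqxx in ne.
  case: eqP => // xb; by subst; rewrite cab eqxx in ne.
- by rewrite (twin_ball H).
Qed.
End Dist.


Lemma rc_sym (T : finType) (e : rel T) k (c : T -> 'I_k) u v :
  symmetric e -> rainbow_connected e c u v -> rainbow_connected e c v u.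
Proof.
move=> se [p /andP [hp hu]]; exists (rev p); apply/andP; split; last by rewrite map_rev rev_uniq.
have := hp; rewrite -rev_path last_rcons belast_rcons rev_cons => hp'.
by rewrite (eq_path (e' := fun z => e^~ z)) // => a b; rewrite se.
Qed.

Lemma uniq_map_in (A B : eqType) (f : A -> B) s : uniq (map f s) -> {in s &, injective f}.
Proof.
elim: s => //= a s IH /andP [fa us] x y; rewrite !inE => /orP [/eqP ->|xs] /orP [/eqP ->|ys] //.
- move=> fay; by rewrite fay map_f in fa.
- move=> fxa; by rewrite -fxa map_f in fa.
- exact: IH.
Qed.

Section Corona.
Variables (T : finType) (e : rel T) (U : finType) (h : rel U).
Hypothesis se : symmetric e.
Local Notation V := (corona_vertex e U).
Local Notation E := (@edge_corona T e U h).

Lemma edge_end (A : gedge e) : exists x, x \in val A.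
Proof.
case: A => A /= /existsP [x /existsP [y /andP [_ /eqP ->]]]; exists x; by rewrite !inE eqxx.
Qed.

Lemma edge_pair (A : gedge e) x y : x \in val A -> y \in val A -> (x == y) || e x y.
Proof.
case: A => A /= /existsP [a /existsP [b /andP [eab /eqP ->]]].
rewrite !inE => /orP [/eqP ->|/eqP ->] /orP [/eqP ->|/eqP ->]; rewrite ?eqxx ?eab ?orbT //.
all: by rewrite se eab orbT.
Qed.

Lemma corona_sym : symmetric h -> symmetric E.
Proof.
move=> sh [x|[A u]] [y|[B v]] //=; try exact: se. by rewrite eq_sym sh.
Qed.

Definition getl (a : V) : option T := if a is inl x then Some x else None.

Definition anchor (a : V) (x : T) : bool :=
  match a with inl y => y == x | inr (A, _) => x \in val A end.

Lemma proj_path s : forall (a : V) x, anchor a x -> path E a s ->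
  path (fun x y => (x == y) || e x y) x (pmap getl s).
Proof.
elim: s => //= b s IH a x ha /andP [hab hp].
case: b hab hp => [y|[B w]] hab hp /=.
- apply/andP; split; last exact: (IH (inl y) y (eqxx y) hp).
  case: a ha hab => [z|[A u]] /=.
    by move=> /eqP -> ->; rewrite orbT.
  move=> xA yA. exact: (edge_pair xA yA).
- apply: (IH (inr (B, w)) x _ hp) => /=.
  by case: a ha hab => [z|[A u]] /=; [move=> /eqP -> | move=> xA /andP [/eqP <- _]].
Qed.

Lemma path_simple (x : T) q : path (fun x y => (x == y) || e x y) x q -> uniq (x :: q) -> path e x q.
Proof.
elim: q x => //= y q IH x /andP [hxy hp] /andP [hx hu].
apply/andP; split; last exact: IH.
case/orP: hxy => // /eqP xy; by rewrite xy inE eqxx in hx.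
Qed.

Lemma inl_pmap x (p : seq V) : x \in pmap getl p -> inl x \in p.
Proof.
elim: p => //= a p IH; case: a => [y|[B w]] /=.
  by rewrite !inE => /orP [/eqP ->|/IH ->]; rewrite ?eqxx ?orbT.
by rewrite inE => /IH ->; rewrite orbT.
Qed.

Lemma restrict_rainbow k (c : V -> 'I_k) : rainbow_vertex_coloring E c ->
  rainbow_vertex_coloring e (fun x => c (inl x)).
Proof.
move=> hc u v nuv.
have nuv' : (inl u : V) != inl v by [].
have [p /andP [hp hu]] := hc _ _ nuv'.
have := proj_path (a := inl u) (x := u) (eqxx u) hp.
rewrite -cats1 pmap_cat /= cats1 => hp'.
have lv : last u (rcons (pmap getl p) v) = v by rewrite last_rcons.
move: lv; case: (shortenP hp') => q hq uq sub lq.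
have hq' := path_simple hq uq.
case/lastP: q hq hq' uq sub lq => [|q z] _ hq' uq sub lq.
  by move: lq => /= /eqP; rewrite (negbTE nuv).
move: lq; rewrite last_rcons => zv; subst z.
exists q; apply/andP; split => //.
rewrite map_inj_in_uniq; last first.
  move=> x y xq yq /= cxy.
  have hin : forall t, t \in q -> inl t \in p.
    move=> t tq; have := sub t; rewrite !mem_rcons !inE tq orbT.
    move=> /(_ isT) /orP [/eqP tv|]; last exact: inl_pmap.
    by move: uq; rewrite /= rcons_uniq -tv tq andbF.
  by have := uniq_map_in hu (hin x xq) (hin y yq) cxy => -[].
by move: uq; rewrite /= rcons_uniq => /and3P [_ _].
Qed.
End Corona.


Section Main.
Variables (T : finType) (e : rel T) (n : nat).
Hypotheses (se : symmetric e) (conn : connected_graph e) (n2 : 2 <= n).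
Variable A0 : gedge e.
Local Notation V := (corona_vertex e 'I_n).
Local Notation E := (@edge_corona T e 'I_n (@complete_rel n)).

Lemma eq_inr (a b : gedge e * 'I_n) : ((inr a : V) == inr b) = (a == b).
Proof. by apply/eqP/eqP => [[]|->]. Qed.

Lemma twins_copy A w1 w2 (y : V) :
  ((y == inr (A, w1)) || E (inr (A, w1)) y) = ((y == inr (A, w2)) || E (inr (A, w2)) y).
Proof.
case: y => [z|[B w]] //=.
rewrite !eq_inr !xpair_eqE /complete_rel.
case: (eqVneq B A) => [eBA|ne]; [subst B; rewrite ?eqxx /= | ].
  by rewrite (eq_sym w1) (eq_sym w2) !orbN.
case: eqP => [?|_]; first by subst; move/eqP: ne.
by case: eqP => [?|_] //; subst; move/eqP: ne.
Qed.

Lemma lower_n k (c : V -> 'I_k) : locating_rainbow_coloring E c -> n < k.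
Proof.
case=> _ _ hloc.
have [x0 x0A] := edge_end A0.
pose f := fun w : 'I_n => c (inr (A0, w)).
have finj : injective f.
  move=> w1 w2 fw; have := hloc _ _ (twin_code (twins_copy A0 w1 w2) fw); by case.
have nk := leq_card f finj; rewrite !card_ord in nk.
rewrite ltn_neqAle nk andbT; apply/eqP => nk'.
have onto : forall i, exists w, f w = i.
  move=> i; have hc : #|'I_k| <= #|'I_n| by rewrite !card_ord nk'.
  have /codomP [w ->] := inj_card_onto finj hc i.
  by exists w.
have [w0 fw0] := onto (c (inl x0)).
suff : (inl x0 : V) = inr (A0, w0) by [].
apply: hloc => i.
case: (eqVneq i (c (inl x0))) => [->|ne].
  by rewrite dist_class_self -fw0 /f dist_class_self.
have [wi fwi] := onto i.
have h1 : forall v : V, E v (inr (A0, wi)) -> c v != i -> dist_class E c v i = 1.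
  move=> v ev nv; apply/eqP; rewrite eqn_leq dist_ge1 // andbT.
  apply: (leq_trans _ (gdist_adj ev)); exact: dist_class_le.
rewrite !h1 //.
- apply/andP; split; first exact/eqP.
  rewrite /complete_rel; apply/eqP => ww; subst wi.
  by rewrite fw0 in fwi; rewrite fwi eqxx in ne.
- by rewrite -[c (inr (A0, w0))]/(f w0) fw0 eq_sym.
- by rewrite eq_sym.
Qed.


Let NT := #|T|.
Let NE := #|{: gedge e}|.
Let K := NT + NE + n.-1.

Definition rT (x : T) : nat := enum_rank x.
Definition rE (A : gedge e) : nat := enum_rank A.
Arguments rT : simpl never.
Arguments rE : simpl never.
Lemma rT_lt x : rT x < NT. Proof. exact: ltn_ord. Qed.
Lemma rE_lt A : rE A < NE. Proof. exact: ltn_ord. Qed.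
Lemma rT_inj : injective rT. Proof. by move=> x y /ord_inj /enum_rank_inj. Qed.
Lemma rE_inj : injective rE. Proof. by move=> x y /ord_inj /enum_rank_inj. Qed.

Definition cn (a : V) : nat :=
  match a with
  | inl x => rT x
  | inr (A, w) => if nat_of_ord w == 0 then NT + rE A else NT + NE + w.-1
  end.

Lemma cn_lt a : cn a < K.
Proof.
rewrite /K; case: a => [x|[A w]] /=.
  have := rT_lt x; lia.
have := rE_lt A; have := ltn_ord w.
case: eqP => _; lia.
Qed.

Definition col (a : V) : 'I_K := Ordinal (cn_lt a).

Lemma colinj : injective (fun x : T => col (inl x)).
Proof. by move=> x y /(congr1 val) /= /rT_inj. Qed.

Lemma gpath x y : exists q, [&& path e x q, last x q == y & uniq (x :: q)].
Proof.
have /connectP [p hp ->] := conn x y.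
case: (shortenP hp) => q hq uq _; exists q; by rewrite hq eqxx uq.
Qed.

Lemma rb_inl x (v : V) : inl x != v -> rainbow_connected E col (inl x) v.
Proof.
case: v => [y|[B w]] nv.
- have nxy : x != y by apply: contraNneq nv => ->.
  have [q /and3P [hq lq uq]] := gpath x y.
  case/lastP: q hq lq uq => [|q z] hq lq uq; first by rewrite /= (negbTE nxy) in lq.
  rewrite last_rcons in lq; move/eqP: lq => lq; subst z.
  exists (map inl q); apply/andP; split.
    by rewrite -map_rcons path_map.
  rewrite -map_comp (map_inj_uniq colinj).
  by move: uq; rewrite /= rcons_uniq => /and3P [].
- have [y yB] := edge_end B.
  have [q /and3P [hq /eqP lq uq]] := gpath x y.
  exists (map inl q); apply/andP; split.
    by rewrite rcons_path path_map last_map hq lq.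
  rewrite -map_comp (map_inj_uniq colinj).
  by case/andP: uq.
Qed.

Lemma rb_inr A w B w' : (inr (A, w) : V) != inr (B, w') ->
  rainbow_connected E col (inr (A, w)) (inr (B, w')).
Proof.
move=> nv; case: (eqVneq A B) => [eAB|nAB].
  subst B; exists [::] => /=; rewrite !andbT; apply/andP; split; first exact/eqP.
  by rewrite /complete_rel; apply: contraNneq nv => ->.
have [x xA] := edge_end A; have [y yB] := edge_end B.
have [q /and3P [hq /eqP lq uq]] := gpath x y.
exists (inl x :: map inl q); apply/andP; split.
  by rewrite /= xA rcons_path path_map last_map hq lq.
rewrite -(map_comp col inl (x :: q)) (map_inj_uniq colinj) //.
Qed.

Lemma col_rainbow : rainbow_vertex_coloring E col.
Proof.
move=> [x|[A w]] v nuv; first exact: rb_inl.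
case: v nuv => [y|[B w']] nuv; last exact: rb_inr.
apply: rc_sym; first by apply: corona_sym => // a b; rewrite /complete_rel eq_sym.
by apply: rb_inl; rewrite eq_sym.
Qed.


Lemma n0 : 0 < n. Proof. exact: ltnW n2. Qed.

Lemma col_onto (i : 'I_K) : exists x, col x = i.
Proof.
have hi := ltn_ord i; rewrite {2}/K in hi.
case: (ltnP i NT) => h1.
  exists (inl (enum_val (Ordinal h1))); apply: ord_inj => /=.
  by rewrite /rT enum_valK.
case: (ltnP i (NT + NE)) => h2.
  have h3 : i - NT < #|{: gedge e}| by rewrite -/NE; lia.
  exists (inr (enum_val (Ordinal h3), Ordinal n0)); apply: ord_inj => /=.
  by rewrite /rE enum_valK /=; lia.
have h3 : (i - NT - NE).+1 < n by lia.
exists (inr (A0, Ordinal h3)); apply: ord_inj => /=; lia.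
Qed.

Lemma cn_a0 A (z : V) : cn z = NT + rE A -> z = inr (A, Ordinal n0).
Proof.
case: z => [x|[A' w]] /=.
  have := rT_lt x; lia.
have := rE_lt A; have := rE_lt A'.
case: eqP => w0 ha hb; last lia.
move=> h; have /rE_inj -> : rE A' = rE A by lia.
by congr (inr (_, _)); apply: ord_inj.
Qed.

Lemma col_locate (u v : V) :
  (forall i, dist_class E col u i = dist_class E col v i) -> u = v.
Proof.
move=> hc.
have cuv : col u = col v.
  apply/eqP; apply: contraT => ne.
  have := hc (col u); rewrite dist_class_self => /esym h0.
  by have := @dist_ge1 _ E _ col v (col u); rewrite eq_sym ne h0 => /(_ isT).
have cnuv : cn u = cn v by have := congr1 val cuv.
case: u v hc cuv cnuv => [x|[A w]] [y|[B w']] hc cuv /=.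
- by move/rT_inj => ->.
- have := rT_lt x; case: eqP => _; lia.
- have := rT_lt y; case: eqP => _; lia.
have := rE_lt A; have := rE_lt B.
case: eqP => hw; case: eqP => hw'; try lia.
- move=> _ _ h; have /rE_inj -> : rE A = rE B by lia.
  by congr (inr (_, _)); apply: ord_inj; rewrite hw hw'.
move=> _ _ h.
have ww : w = w' by apply: ord_inj; lia.
subst w'.
case: (eqVneq A B) => [-> //|nAB]; exfalso.
set a0 : V := inr (A, Ordinal n0).
have ea0 : E (inr (A, w)) a0.
  apply/andP; split; first exact/eqP.
  by rewrite /complete_rel; apply/eqP => /(congr1 val) /=.
have l1 : dist_class E col (inr (A, w)) (col a0) <= 1.
  apply: (leq_trans _ (gdist_adj ea0)); exact: dist_class_le.
have l2 : 2 <= dist_class E col (inr (B, w)) (col a0).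
  apply: dist_class_ge.
    move=> z /(congr1 val) /= cz.
    have -> : z = a0 by apply: cn_a0; rewrite cz.
    rewrite leqNgt; apply/negP => /gdist_le1 [].
      by move=> [ha _]; rewrite ha eqxx in nAB.
    by rewrite /= => /andP [/eqP ha _]; rewrite ha eqxx in nAB.
  have na : a0 != inr (B, w) :> V.
    rewrite eq_inr xpair_eqE; apply/nandP; left.
    by apply: contraNneq nAB => ->.
  exact: card_ge2 na.
by rewrite (hc (col a0)) in l1; have := leq_trans l2 l1.
Qed.

Lemma col_loc : locating_rainbow_coloring E col.
Proof. split; [exact: col_rainbow | exact: col_onto | exact: col_locate]. Qed.

End Main.


Lemma exists_edge (T : finType) (e : rel T) : connected_graph e -> 1 < #|T| ->
  exists A : gedge e, true.
Proof.
move=> conn /card_gt1P [x [y [_ _ nxy]]].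
have /connectP [p hp ly] := conn x y.
case: p hp ly => [|z p] /=; first by move=> _ yx; rewrite yx eqxx in nxy.
move=> /andP [exz _] _.
have hA : is_edge e [set x; z].
  by apply/existsP; exists x; apply/existsP; exists z; rewrite exz eqxx.
by exists (exist (fun A => is_edge e A) _ hA).
Qed.

Lemma G_rainbow (T : finType) (e : rel T) : connected_graph e ->
  rainbow_vertex_coloring e (@enum_rank T).
Proof.
move=> conn u v nuv.
have [q /and3P [hq lq uq]] := gpath conn u v.
case/lastP: q hq lq uq => [|q z] hq lq uq; first by rewrite /= (negbTE nuv) in lq.
rewrite last_rcons in lq; move/eqP: lq => lq; subst z.
exists q; rewrite hq /= (map_inj_uniq enum_rank_inj).
by move: uq; rewrite /= rcons_uniq => /and3P [].
Qed.

Theorem theorem3 (m n : nat) (T : finType) (e : rel T) :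
  2 <= m -> 2 <= n -> #|T| = m ->
  simple_graph e -> connected_graph e ->
  exists r l : nat,
    [/\ is_rvc e r,
        is_rvcl (@edge_corona T e (ordinal n) (@complete_rel n)) l,
        maxn r n.+1 <= l &
        l <= m + n + #|{: gedge e}| - 1].
Proof.
move=> m2 n2 hT [se _] conn.
have [A0 _] : exists A : gedge e, true by apply: exists_edge conn _; rewrite hT.
have PG : exists c : T -> 'I_#|T|, rainbow_vertex_coloring e c.
  by exists (@enum_rank T); exact: G_rainbow.
have [r [[cr hcr] rmin]] := @ex_min (fun k => exists c : T -> 'I_k, rainbow_vertex_coloring e c) _ PG.
have hloc := col_loc se conn n2 A0.
pose PP := fun k => exists c : corona_vertex e 'I_n -> 'I_k,
  locating_rainbow_coloring (@edge_corona T e (ordinal n) (@complete_rel n)) c.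
have PV : PP (#|T| + #|{: gedge e}| + n.-1) by exists (col n2); exact: hloc.
have [l [[cl hcl] lmin]] := @ex_min PP _ PV.
exists r, l; split.
- split; [by exists cr | move=> k c hc; apply: rmin; by exists c].
- split; [by exists cl | move=> k c hc; apply: lmin; by exists c].
- rewrite geq_max; apply/andP; split.
  + apply: rmin; exists (fun x => cl (inl x)); apply: (restrict_rainbow (h := @complete_rel n)) => //; by case: hcl.
  + exact: lower_n A0 _ _ hcl.
- have := lmin _ PV; rewrite hT; lia.
Qed.
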